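(* Let $(\mathcal{C},\mathbb{E},\mathfrak{s})$ be an extriangulated category with enough injective objects. If $\mathcal{I}$ is a special precovering ideal of $\mathcal{C}$, then $\mathcal{I}^{\perp_{\mathbb{E}}}$ is a special preenveloping ideal.
   Context: An extriangulated category $(\mathcal{C},\mathbb{E},\mathfrak{s})$ (Nakaoka–Palu): additive $\mathcal{C}$, biadditive $\mathbb{E}:\mathcal{C}^{\mathrm{op}}\times\mathcal{C}\to\mathrm{Ab}$, additive realization $\mathfrak{s}$ assigning to each $\delta\in\mathbb{E}(C,A)$ an equivalence class of sequences $A\to B\to C$, forming $\mathbb{E}$-triangles $A\to B\to C\overset{\delta}{\dashrightarrow}$, satisfying (ET1)–(ET4), (ET3)$^{\mathrm{op}}$, (ET4)$^{\mathrm{op}}$. Notation $a_\star\delta=\mathbb{E}(C,a)(\delta)$, $c^\star\delta=\mathbb{E}(c,A)(\delta)$. A morphism of $\mathbb{E}$-triangles is a commuting triple $(a,b,c)$ with $a_\star\delta=c^\star\delta'$. An object $E$ is injective if for every $\mathbb{E}$-triangle $A\xrightarrow{x}B\to C\overset{\delta}{\dashrightarrow}$ every $A\to E$ factors through $x$ (equivalently $\mathbb{E}(C,E)=0$ for all $C$); $\mathcal{C}$ has enough injective objects if every $A$ admits an $\mathbb{E}$-triangle $A\to E\to C\overset{\delta}{\dashrightarrow}$ with $E$ injective. An ideal: class of morphisms with zeros, closed under sums and two-sided composition. $\mathcal{M}^{\perp_{\mathbb{E}}}=\{g:A\to Y\mid m^\star g_\star\delta=0\ \forall m\in\mathcal{M},\,m:X\to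 C,\ \forall\delta\in\mathbb{E}(C,A)\}$; ${}^{\perp_{\mathbb{E}}}\mathcal{M}=\{g:X\to C\mid g^\star m_\star\delta=0\ \forall m\in\mathcal{M},\,m:A\to Y,\ \forall\delta\in\mathbb{E}(C,A)\}$. A special $\mathcal{I}$-precover of $C$: $i:X\to C$ in $\mathcal{I}$ with $\mathbb{E}$-triangles $A\to B\to C\overset{\delta}{\dashrightarrow}$, $A'\to X\xrightarrow{i}C\overset{\delta'}{\dashrightarrow}$ and a morphism $(j,b,\mathrm{id}_C)$ between them with $j\in\mathcal{I}^{\perp_{\mathbb{E}}}$. A special $\mathcal{J}$-preenvelope of $A$: $e:A\to X$ in $\mathcal{J}$ with $\mathbb{E}$-triangles $A\xrightarrow{e}X\to Y\overset{\delta}{\dashrightarrow}$, $A\to B\to C\overset{\delta'}{\dashrightarrow}$ and a morphism $(\mathrm{id}_A,b,j)$ from the first to the second with $j\in{}^{\perp_{\mathbb{E}}}\mathcal{J}$. Special precovering (resp. preenveloping) ideal: every object has a special precover (resp. preenvelope). *)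

(* Defs.v *)
From HB Require Import structures.
From mathcomp Require Import all_boot all_algebra.
Set Implicit Arguments. Unset Strict Implicit. Unset Printing Implicit Defensive.
Import GRing.Theory.
Local Open Scope ring_scope.

Record Precat := {
  Obj :> Type;
  Mor : Obj -> Obj -> zmodType;
  idm : forall A, Mor A A;
  comp : forall A B C, Mor B C -> Mor A B -> Mor A C;
  compA : forall A B C D (h : Mor C D) (g : Mor B C) (f : Mor A B),
     comp h (comp g f) = comp (comp h g) f;
  comp1m : forall A B (f : Mor A B), comp (idm B) f = f;
  compm1 : forall A B (f : Mor A B), comp f (idm A) = f;
  compDl : forall A B C (g g' : Mor B C) (f : Mor A B),
     comp (g + g') f = comp g f + comp g' f;
  compDr : forall A B C (g : Mor B C) (f f' : Mor A B),
     comp g (f + f') = comp g f + comp g f'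
}.
Arguments Mor {p}.
Arguments idm {p}.
Arguments comp {p A B C}.

Section Additive.
Variable K : Precat.

Definition is_zero_obj (Z : K) : Prop := idm Z = 0.

Definition is_biprod (A B P : K) (i1 : Mor A P) (i2 : Mor B P)
    (p1 : Mor P A) (p2 : Mor P B) : Prop :=
  [/\ comp p1 i1 = idm A, comp p2 i2 = idm B, comp p1 i2 = 0, comp p2 i1 = 0
    & comp i1 p1 + comp i2 p2 = idm P].

Definition additive_cat : Prop :=
  (exists Z : K, is_zero_obj Z) /\
  (forall A B : K, exists (P : K) (i1 : Mor A P) (i2 : Mor B P)
     (p1 : Mor P A) (p2 : Mor P B), is_biprod i1 i2 p1 p2).

Definition is_iso (A B : K) (f : Mor A B) : Prop :=
  exists g : Mor B A, comp g f = idm A /\ comp f g = idm B.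

Section Ext.
(** E(C,A): contravariant in C, covariant in A.
    push a d = a_* d ,  pull c d = c^* d. *)
Variable E : K -> K -> zmodType.
Variable push : forall {C A A' : K}, Mor A A' -> E C A -> E C A'.
Variable pull : forall {C C' A : K}, Mor C' C -> E C A -> E C' A.
(** realization: real d x y  means  A -x-> B -y-> C  lies in the class s(d) *)
Variable real : forall {A C : K}, E C A -> forall {B : K}, Mor A B -> Mor B C -> Prop.

Definition biadditive : Prop :=
  [/\ (forall C A (d : E C A), push (idm A) d = d),
      (forall C A A' A'' (a : Mor A A') (a' : Mor A' A'') (d : E C A),
          push (comp a' a) d = push a' (push a d)),
      (forall C A (d : E C A), pull (idm C) d = d),
      (forall C C' C'' A (c : Mor C' C) (c' : Mor C'' C') (d : E C A),
          pull (comp c c') d = pull c' (pull c d))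
    & (forall C C' A A' (a : Mor A A') (c : Mor C' C) (d : E C A),
          push a (pull c d) = pull c (push a d))] /\
  [/\ (forall C A A' (a : Mor A A') (d d' : E C A),
          push a (d + d') = push a d + push a d'),
      (forall C A A' (a a' : Mor A A') (d : E C A),
          push (a + a') d = push a d + push a' d),
      (forall C C' A (c : Mor C' C) (d d' : E C A),
          pull c (d + d') = pull c d + pull c d')
    & (forall C C' A (c c' : Mor C' C) (d : E C A),
          pull (c + c') d = pull c d + pull c' d)].

(** s(d) is an equivalence class of sequences A -> B -> C, where
    A -x-> B -y-> C ~ A -x'-> B' -y'-> C iff there is an isomorphism
    b : B -> B' with b x = x' and y' b = y. *)
Definition realization_class : Prop :=
  [/\ (forall A C (d : E C A), exists (B : K) (x : Mor A B) (y : Mor B C), real d x y),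
      (forall A C (d : E C A) B B' (x : Mor A B) (y : Mor B C) (x' : Mor A B') (y' : Mor B' C),
          real d x y -> real d x' y' ->
          exists b : Mor B B', is_iso b /\ comp b x = x' /\ comp y' b = y)
    & (forall A C (d : E C A) B B' (x : Mor A B) (y : Mor B C) (x' : Mor A B') (y' : Mor B' C)
          (b : Mor B B'), real d x y -> is_iso b -> comp b x = x' -> comp y' b = y ->
          real d x' y')].

Definition tri_mor (A B C A' B' C' : K) (d : E C A) (x : Mor A B) (y : Mor B C)
    (d' : E C' A') (x' : Mor A' B') (y' : Mor B' C')
    (a : Mor A A') (b : Mor B B') (c : Mor C C') : Prop :=
  [/\ comp b x = comp x' a, comp c y = comp y' b & push a d = pull c d'].

Definition ET2 : Prop :=
  (forall A C P (i1 : Mor A P) (i2 : Mor C P) (p1 : Mor P A) (p2 : Mor P C),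
      is_biprod i1 i2 p1 p2 -> real (0 : E C A) i1 p2) /\
  (forall A A' B B' C C' (PA PB PC : K)
      (iA : Mor A PA) (iA' : Mor A' PA) (pA : Mor PA A) (pA' : Mor PA A')
      (iB : Mor B PB) (iB' : Mor B' PB) (pB : Mor PB B) (pB' : Mor PB B')
      (iC : Mor C PC) (iC' : Mor C' PC) (pC : Mor PC C) (pC' : Mor PC C')
      (d : E C A) (d' : E C' A') (x : Mor A B) (y : Mor B C) (x' : Mor A' B') (y' : Mor B' C'),
      is_biprod iA iA' pA pA' -> is_biprod iB iB' pB pB' -> is_biprod iC iC' pC pC' ->
      real d x y -> real d' x' y' ->
      real (push iA (pull pC d) + push iA' (pull pC' d'))
           (comp iB (comp x pA) + comp iB' (comp x' pA'))
           (comp iC (comp y pB) + comp iC' (comp y' pB'))).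

Definition ET3 : Prop :=
  forall A B C A' B' C' (d : E C A) (x : Mor A B) (y : Mor B C)
    (d' : E C' A') (x' : Mor A' B') (y' : Mor B' C') (a : Mor A A') (b : Mor B B'),
    real d x y -> real d' x' y' -> comp b x = comp x' a ->
    exists c : Mor C C', tri_mor d x y d' x' y' a b c.

Definition ET3op : Prop :=
  forall A B C A' B' C' (d : E C A) (x : Mor A B) (y : Mor B C)
    (d' : E C' A') (x' : Mor A' B') (y' : Mor B' C') (b : Mor B B') (c : Mor C C'),
    real d x y -> real d' x' y' -> comp c y = comp y' b ->
    exists a : Mor A A', tri_mor d x y d' x' y' a b c.

Definition ET4 : Prop :=
  forall (A B C D F : K) (f : Mor A B) (f' : Mor B D) (g : Mor B C) (g' : Mor C F)
    (d : E D A) (d' : E F B),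
    real d f f' -> real d' g g' ->
    exists (Eo : K) (dd : Mor D Eo) (e : Mor Eo F) (h' : Mor C Eo) (d'' : E Eo A),
      [/\ real d'' (comp g f) h', real (push f' d') dd e,
          pull dd d'' = d, push f d'' = pull e d' &
          comp h' g = comp dd f' /\ comp e h' = g'].

Definition ET4op : Prop :=
  forall (A B C D F : K) (f' : Mor D B) (f : Mor B A) (g' : Mor F C) (g : Mor C B)
    (d : E A D) (d' : E B F),
    real d f' f -> real d' g' g ->
    exists (Eo : K) (h' : Mor Eo C) (dd : Mor Eo D) (e : Mor F Eo) (d'' : E A Eo),
      [/\ real d'' h' (comp f g), real (pull f' d') e dd,
          push dd d'' = d, pull f d'' = push e d' &
          comp g h' = comp f' dd /\ comp h' e = g'].

End Ext.
End Additive.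

Record Extri := {
  ecat :> Precat;
  Ext : ecat -> ecat -> zmodType;
  push : forall (C A A' : ecat), Mor A A' -> Ext C A -> Ext C A';
  pull : forall (C C' A : ecat), Mor C' C -> Ext C A -> Ext C' A;
  real : forall (A C : ecat), Ext C A -> forall (B : ecat), Mor A B -> Mor B C -> Prop;
  ax_additive : additive_cat ecat;
  ax_ET1 : biadditive push pull;
  ax_real : realization_class real;
  ax_ET2 : ET2 push pull real;
  ax_ET3 : ET3 push pull real;
  ax_ET3op : ET3op push pull real;
  ax_ET4 : ET4 push pull real;
  ax_ET4op : ET4op push pull real
}.
Arguments Ext {e}.
Arguments push {e C A A'}.
Arguments pull {e C C' A}.
Arguments real {e A C} d {B}.

Section Notions.
Variable X : Extri.

Definition injective_obj (I : X) : Prop :=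
  forall (A B C : X) (d : Ext C A) (x : Mor A B) (y : Mor B C), real d x y ->
  forall u : Mor A I, exists v : Mor B I, comp v x = u.

Definition enough_injectives : Prop :=
  forall A : X, exists (I C : X) (x : Mor A I) (y : Mor I C) (d : Ext C A),
    injective_obj I /\ real d x y.

Definition ideal (I : forall A B : X, Mor A B -> Prop) : Prop :=
  [/\ (forall A B : X, I A B 0),
      (forall (A B : X) (f g : Mor A B), I A B f -> I A B g -> I A B (f + g))
    & (forall (A B C D : X) (h : Mor C D) (f : Mor B C) (g : Mor A B),
         I B C f -> I A D (comp h (comp f g)))].

Definition perpR (I : forall A B : X, Mor A B -> Prop) (A Y : X) (g : Mor A Y) : Prop :=
  forall (X0 C : X) (m : Mor X0 C), I X0 C m ->
  forall d : Ext C A, pull m (push g d) = 0.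

Definition perpL (J : forall A B : X, Mor A B -> Prop) (X0 C : X) (g : Mor X0 C) : Prop :=
  forall (A Y : X) (m : Mor A Y), J A Y m ->
  forall d : Ext C A, pull g (push m d) = 0.

Definition tri_morX (A B C A' B' C' : X) (d : Ext C A) (x : Mor A B) (y : Mor B C)
    (d' : Ext C' A') (x' : Mor A' B') (y' : Mor B' C')
    (a : Mor A A') (b : Mor B B') (c : Mor C C') : Prop :=
  tri_mor (@push X) (@pull X) d x y d' x' y' a b c.

Definition special_precover (I : forall A B : X, Mor A B -> Prop) (C X0 : X) (i : Mor X0 C) : Prop :=
  I X0 C i /\
  exists (A B A' : X) (x : Mor A B) (y : Mor B C) (d : Ext C A)
         (x' : Mor A' X0) (d' : Ext C A') (j : Mor A A') (b : Mor B X0),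
    [/\ real d x y, real d' x' i, tri_morX d x y d' x' i j b (idm C) & perpR I j].

Definition special_preenvelope (J : forall A B : X, Mor A B -> Prop) (A X0 : X) (e : Mor A X0) : Prop :=
  J A X0 e /\
  exists (Y B C : X) (y : Mor X0 Y) (d : Ext Y A) (x' : Mor A B) (y' : Mor B C)
         (d' : Ext C A) (b : Mor X0 B) (j : Mor Y C),
    [/\ real d e y, real d' x' y', tri_morX d e y d' x' y' (idm A) b j & perpL J j].

Definition special_precovering (I : forall A B : X, Mor A B -> Prop) : Prop :=
  ideal I /\ forall C : X, exists (X0 : X) (i : Mor X0 C), special_precover I i.

Definition special_preenveloping (J : forall A B : X, Mor A B -> Prop) : Prop :=
  ideal J /\ forall A : X, exists (X0 : X) (e : Mor A X0), special_preenvelope J e.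

End Notions.

(* Main.v *)
Require Import Defs.
From mathcomp Require Import all_boot all_algebra.
Set Implicit Arguments. Unset Strict Implicit. Unset Printing Implicit Defensive.
Import GRing.Theory.
Local Open Scope ring_scope.

Local Notation comp := Defs.comp.
Section S.
Variable X : Extri.
Lemma cA (A B C D : X) (h : Mor C D) (g : Mor B C) (f : Mor A B) : comp h (comp g f) = comp (comp h g) f.
Proof. exact: Defs.compA. Qed.

Lemma comp0m (A B C : X) (f : Mor A B) : comp (0 : Mor B C) f = 0.
Proof.
have h := @compDl X A B C 0 0 f; rewrite addr0 in h.
by apply: (@addrI _ (comp (0 : Mor B C) f)); rewrite addr0 -h.
Qed.

Lemma compm0 (A B C : X) (g : Mor B C) : comp g (0 : Mor A B) = 0.
Proof.
have h := @compDr X A B C g 0 0; rewrite addr0 in h.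
by apply: (@addrI _ (comp g (0 : Mor A B))); rewrite addr0 -h.
Qed.

Lemma compNm (A B C : X) (g : Mor B C) (f : Mor A B) : comp (- g) f = - comp g f.
Proof. by apply/eqP; rewrite -addr_eq0 -compDl addNr comp0m. Qed.

Lemma compmN (A B C : X) (g : Mor B C) (f : Mor A B) : comp g (- f) = - comp g f.
Proof. by apply/eqP; rewrite -addr_eq0 -compDr addNr compm0. Qed.

Lemma compBl (A B C : X) (g g' : Mor B C) (f : Mor A B) :
  comp (g - g') f = comp g f - comp g' f.
Proof. by rewrite compDl compNm. Qed.

Lemma compBr (A B C : X) (g : Mor B C) (f f' : Mor A B) :
  comp g (f - f') = comp g f - comp g f'.
Proof. by rewrite compDr compmN. Qed.

Definition ET1_all := ax_ET1 X.

Lemma push1 (C A : X) (d : Ext C A) : push (idm A) d = d.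
Proof. by case: ET1_all => [[]]. Qed.
Lemma pushC (C A A' A'' : X) (a : Mor A A') (a' : Mor A' A'') (d : Ext C A) :
  push (comp a' a) d = push a' (push a d).
Proof. by case: ET1_all => [[]]. Qed.
Lemma pull1 (C A : X) (d : Ext C A) : pull (idm C) d = d.
Proof. by case: ET1_all => [[]]. Qed.
Lemma pullC (C C' C'' A : X) (c : Mor C' C) (c' : Mor C'' C') (d : Ext C A) :
  pull (comp c c') d = pull c' (pull c d).
Proof. by case: ET1_all => [[]]. Qed.
Lemma pushpull (C C' A A' : X) (a : Mor A A') (c : Mor C' C) (d : Ext C A) :
  push a (pull c d) = pull c (push a d).
Proof. by case: ET1_all => [[]]. Qed.
Lemma pushD (C A A' : X) (a : Mor A A') (d d' : Ext C A) : push a (d + d') = push a d + push a d'.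
Proof. by case: ET1_all => _ []. Qed.
Lemma pushDm (C A A' : X) (a a' : Mor A A') (d : Ext C A) : push (a + a') d = push a d + push a' d.
Proof. by case: ET1_all => _ []. Qed.
Lemma pullD (C C' A : X) (c : Mor C' C) (d d' : Ext C A) : pull c (d + d') = pull c d + pull c d'.
Proof. by case: ET1_all => _ []. Qed.
Lemma pullDm (C C' A : X) (c c' : Mor C' C) (d : Ext C A) : pull (c + c') d = pull c d + pull c' d.
Proof. by case: ET1_all => _ []. Qed.

Lemma push0 (C A A' : X) (a : Mor A A') : push a (0 : Ext C A) = 0.
Proof. have h := @pushD C A A' a 0 0; rewrite addr0 in h.
by apply: (@addrI _ (push a (0 : Ext C A))); rewrite addr0 -h. Qed.
Lemma pull0 (C C' A : X) (c : Mor C' C) : pull c (0 : Ext C A) = 0.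
Proof. have h := @pullD C C' A c 0 0; rewrite addr0 in h.
by apply: (@addrI _ (pull c (0 : Ext C A))); rewrite addr0 -h. Qed.
Lemma push0m (C A A' : X) (d : Ext C A) : push (0 : Mor A A') d = 0.
Proof. have h := @pushDm C A A' 0 0 d; rewrite addr0 in h.
by apply: (@addrI _ (push (0 : Mor A A') d)); rewrite addr0 -h. Qed.
Lemma pull0m (C C' A : X) (d : Ext C A) : pull (0 : Mor C' C) d = 0.
Proof. have h := @pullDm C C' A 0 0 d; rewrite addr0 in h.
by apply: (@addrI _ (pull (0 : Mor C' C) d)); rewrite addr0 -h. Qed.
Lemma pullNm (C C' A : X) (c : Mor C' C) (d : Ext C A) : pull (- c) d = - pull c d.
Proof. by apply/eqP; rewrite -addr_eq0 -pullDm addNr pull0m. Qed.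


Lemma zero_ex : exists Z : X, is_zero_obj Z.
Proof. by case: (ax_additive X). Qed.

Lemma biprod_ex (A B : X) : exists (P : X) (i1 : Mor A P) (i2 : Mor B P)
     (p1 : Mor P A) (p2 : Mor P B), is_biprod i1 i2 p1 p2.
Proof. by case: (ax_additive X). Qed.

Lemma ET21 (A C P : X) (i1 : Mor A P) (i2 : Mor C P) (p1 : Mor P A) (p2 : Mor P C) :
  is_biprod i1 i2 p1 p2 -> real (0 : Ext C A) i1 p2.
Proof. by case: (ax_ET2 X) => h _; apply: h. Qed.

Lemma biprod_sym (A B P : X) (i1 : Mor A P) (i2 : Mor B P) (p1 : Mor P A) (p2 : Mor P B) :
  is_biprod i1 i2 p1 p2 -> is_biprod i2 i1 p2 p1.
Proof. by case=> h1 h2 h3 h4 h5; split => //; rewrite addrC. Qed.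

Lemma biprod_zero (B Z : X) : is_zero_obj Z ->
  is_biprod (idm B) (0 : Mor Z B) (idm B) (0 : Mor B Z).
Proof.
move=> hZ; split; rewrite ?comp1m ?compm0 ?comp0m //.
by rewrite addr0.
Qed.

Lemma push_infl0 (A B C : X) (d : Ext C A) (x : Mor A B) (y : Mor B C) :
  real d x y -> push x d = 0.
Proof.
move=> hd; case: zero_ex => Z hZ.
have hz := ET21 (biprod_zero B hZ).
have [c [_ _ h]] := ax_ET3 hd hz (erefl (comp (idm B) x)).
by rewrite h pull0.
Qed.

Lemma ET3' (A B C A' B' C' : X) (d : Ext C A) (x : Mor A B) (y : Mor B C)
    (d' : Ext C' A') (x' : Mor A' B') (y' : Mor B' C') (a : Mor A A') (b : Mor B B') :
    real d x y -> real d' x' y' -> comp b x = comp x' a ->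
    exists c : Mor C C', tri_morX d x y d' x' y' a b c.
Proof. exact: ax_ET3. Qed.


Lemma compK (A B C : X) (p : Mor B A) (i : Mor A B) (f : Mor C A) :
  comp p i = idm A -> comp p (comp i f) = f.
Proof. by move=> h; rewrite cA h comp1m. Qed.

Lemma compZ (A B C D : X) (p : Mor B D) (i : Mor A B) (f : Mor C A) :
  comp p i = 0 -> comp p (comp i f) = 0.
Proof. by move=> h; rewrite cA h comp0m. Qed.

Lemma pullback_neg (A B C W : X) (d : Ext C A) (x : Mor A B) (y : Mor B C) (c : Mor W C) :
  real d x y -> exists (M : X) (e : Mor A M) (z : Mor M W) (b : Mor M B),
    [/\ real (pull (- c) d) e z, comp b e = x & comp y b = comp (- c) z].
Proof.
move=> hd; case: (zero_ex) => Z hZ.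
have [PB [iB [iB' [pB [pB' hPB]]]]] := biprod_ex B W.
have [PC [iC [iC' [pC [pC' hPC]]]]] := biprod_ex C W.
have hW : is_biprod (0 : Mor Z W) (idm W) (0 : Mor W Z) (idm W).
  by split; rewrite ?comp1m ?compm0 ?comp0m ?add0r.
have hWr := ET21 hW.
have hA := biprod_zero A hZ.
have := (proj2 (ax_ET2 X)) _ _ _ _ _ _ _ _ _ _ _ _ _ _ _ _ _ _ _ _ _ _ _ _ _ _ _
   hA hPB hPC hd hWr.
rewrite push1 pull0 push0 addr0 compm1 comp0m compm0 addr0 comp1m.
set g := _ + _ => hg.
pose k := comp iC (comp c pC').
have [cCi cWi cCWi cWCi sC] := hPC.
have [cBi cWBi cBWi cWBi2 sB] := hPB.
have kk : comp k k = 0.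
  by rewrite /k -!cA (cA pC' iC) cWCi comp0m !compm0.
pose tau := idm PC - k.
pose sig := idm PC + k.
have htau : is_iso tau.
  exists sig; rewrite /tau /sig; split.
    by rewrite compBr compm1 compDl comp1m kk addr0 addrK.

  by rewrite compBl comp1m compDr compm1 kk addr0 addrK.
have hf0 := ET21 (biprod_sym hPC).
have pCk : comp pC k = comp c pC'.
  by rewrite /k compK.
have pC'k : comp pC' k = 0.
  by rewrite /k compZ.
have hfr : real (0 : Ext C W) (comp tau iC') (pC + comp c pC').
  case: (ax_real X) => _ _ h3; apply: (h3 _ _ _ _ _ _ _ _ _ _ hf0 htau) => //.
  rewrite /tau compBr compm1 compDl pCk -cA pC'k compm0.
  by rewrite addr0 addrK.
have pCf : comp pC (comp tau iC') = - c.
  rewrite cA /tau compBr compm1 pCk compBl -cA cCWi cWi compm1.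
  by rewrite add0r.
have [M [h' [dd [e [d'' [_ hr2 _ _ [hgh he]]]]]]] := ax_ET4op hfr hg.
rewrite -pullC pCf in hr2.
have pCg : comp pC g = comp y pB.
  by rewrite /g compDr !cA cCi cCWi comp1m comp0m addr0.
exists M, e, dd, (comp pB h'); split => //.
  by rewrite -cA he cA cBi comp1m.
by rewrite cA -pCg -cA hgh cA pCf.
Qed.

Lemma pullback (A B C W : X) (d : Ext C A) (x : Mor A B) (y : Mor B C) (c : Mor W C) :
  real d x y -> exists (M : X) (e : Mor A M) (z : Mor M W) (b : Mor M B),
    [/\ real (pull c d) e z, comp b e = x & comp y b = comp c z].
Proof. by move=> hd; have := pullback_neg (- c) hd; rewrite opprK. Qed.

Lemma factor_defl (A B C W : X) (d : Ext C A) (x : Mor A B) (y : Mor B C) (c : Mor W C) :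
  real d x y -> pull c d = 0 -> exists v : Mor W B, comp y v = c.
Proof.
move=> hd h0; have [M [e [z [b [hr hbe hyb]]]]] := pullback c hd.
rewrite h0 in hr.
have [P [i1 [i2 [p1 [p2 hP]]]]] := biprod_ex A W.
have hr0 := ET21 hP.
case: (ax_real X) => _ h2 _.
have [phi [_ [_ hphi]]] := h2 _ _ _ _ _ _ _ _ _ hr0 hr.
exists (comp b (comp phi i2)).
case: hP => _ h22 _ _ _.
by rewrite cA hyb -cA (cA z) hphi h22 compm1.
Qed.

Lemma ext_from_inj (A E C C1 : X) (d : Ext C A) (x : Mor A E) (y : Mor E C)
  (hE : injective_obj E) (hd : real d x y) (d1 : Ext C1 A) :
  exists c : Mor C1 C, d1 = pull c d.
Proof.
case: (ax_real X) => h1 _ _.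
have [B2 [x2 [y2 hr]]] := h1 _ _ d1.
have [v hv] := hE _ _ _ _ _ _ hr x.
have hv' : comp v x2 = comp x (idm A) by rewrite compm1.
have [c [_ _ hc]] := ET3' hr hd hv'.
by exists c; rewrite -hc push1.
Qed.


Lemma perpR_ideal (I : forall A B : X, Mor A B -> Prop) : ideal (perpR I).
Proof.
split.
- by move=> A B X0 C m hm d; rewrite push0m pull0.
- by move=> A B f g hf hg X0 C m hm d; rewrite pushDm pullD hf // hg // addr0.
- move=> A B C D h f g hf X0 C0 m hm d.
  by rewrite !pushC -pushpull hf // push0.
Qed.

End S.

Theorem theorem4p4 (X : Extri) (I : forall A B : X, Mor A B -> Prop)
  (hinj : enough_injectives X) (hI : special_precovering I) :
  special_preenveloping (perpR I).
Proof.
split; first exact: perpR_ideal.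
move=> A.
have [E [C [xE [yE [dl [hE hr]]]]]] := hinj A.
case: hI => hIid hprec.
have [X0 [i [hi [A1 [B1 [A' [x1 [y1 [d1 [x' [d' [j [b1 [hr1 hr' [_ _ hjd] hj]]]]]]]]]]]]]] := hprec C.
have [M [e [z [b [hrM hbe hyb]]]]] := pullback i hr.
exists M, e; split.
  move=> X1 C1 m hm d.
  have [c ->] := ext_from_inj hE hr d.
  rewrite pushpull -pullC.
  have hn : I _ _ (comp c m).
    case: hIid => _ _ h3.
    by have := h3 _ _ _ _ c m (idm X1) hm; rewrite compm1.
  have hn0 : pull (comp c m) d' = 0.
    by rewrite pull1 in hjd; rewrite -hjd; exact: hj _ _ _ hn d1.
  have [t ht] := factor_defl hr' hn0.
  by rewrite -ht pullC -pushpull (push_infl0 hrM) pull0.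
exists X0, E, C, z, (pull i dl), xE, yE, dl, b, i; split => //.
  by split; rewrite ?compm1 ?push1.
by move=> A2 Y m hm d; exact: hm _ _ _ hi d.
Qed.
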